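(* For every finite permutation group $G$, $\mathrm{RC}(G)\le \mathrm{H}(G)+1$.
   Context: Let $G$ act on a finite set $\Omega$. A subset $\Lambda\subseteq\Omega$ is independent if its pointwise stabilizer $G_{(\Lambda)}$ differs from $G_{(\Lambda')}$ for every proper subset $\Lambda'\subsetneq\Lambda$; $\mathrm{H}(G)$ is the maximum size of an independent set. For $r\le n$ and $I,J\in\Omega^n$, write $I\sim_r J$ if for every choice of indices $k_1,\dots,k_r\in\{1,\dots,n\}$ there is $h\in G$ with $I_{k_i}^h=J_{k_i}$ for $i=1,\dots,r$. $\mathrm{RC}(G)$ is the least $r$ such that for all $n\ge r$ and all $I,J\in\Omega^n$, $I\sim_r J$ implies $I\sim_n J$. *)

(* Defs.v *)
From mathcomp Require Import all_boot all_fingroup.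
Set Implicit Arguments. Unset Strict Implicit. Unset Printing Implicit Defensive.
Local Open Scope group_scope.

(* G : {group {perm T}} is a permutation group on the finite set Omega = T,
   acting via the natural action 'P (x^h = h x).
   Pointwise stabilizer of L : {set T} in G is 'C_G(L | 'P). *)

Definition independent (T : finType) (G : {group {perm T}}) (L : {set T}) : bool :=
  [forall L' : {set T}, (L' \proper L) ==> ('C_G(L' | 'P) != 'C_G(L | 'P))].

Definition height (T : finType) (G : {group {perm T}}) : nat :=
  \max_(L : {set T} | independent G L) #|L|.

Definition rsim (T : finType) (G : {group {perm T}}) (r n : nat)
    (I J : 'I_n -> T) : Prop :=
  forall k : 'I_r -> 'I_n, exists2 h, h \in G & forall i : 'I_r, h (I (k i)) = J (k i).

Definition rc_prop (T : finType) (G : {group {perm T}}) (r : nat) : Prop :=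
  forall n, r <= n -> forall I J : 'I_n -> T, rsim G r I J -> rsim G n I J.

Definition is_RC (T : finType) (G : {group {perm T}}) (r : nat) : Prop :=
  rc_prop G r /\ forall r', rc_prop G r' -> r <= r'.

(* Main.v *)
Require Import Defs.
From Stdlib Require Import Classical.
From mathcomp Require Import all_boot all_fingroup.
Set Implicit Arguments. Unset Strict Implicit. Unset Printing Implicit Defensive.

Section Aux.
Local Open Scope group_scope.
Variables (T : finType) (G : {group {perm T}}).

Lemma stabP (L : {set T}) (h : {perm T}) :
  reflect (h \in G /\ forall x, x \in L -> h x = x) (h \in 'C_G(L | 'P)).
Proof.
rewrite inE; apply: (iffP andP) => [[hG /astabP hL]|[hG hL]]; split => //.
by apply/astabP => x Lx; exact: hL.
Qed.

Lemma exists_indep (S : {set T}) :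
  exists L : {set T}, [/\ L \subset S, 'C_G(L | 'P) = 'C_G(S | 'P) & independent G L].
Proof.
pose P := fun m => [exists L : {set T}, [&& L \subset S, 'C_G(L | 'P) == 'C_G(S | 'P) & #|L| == m]].
have exP : exists m, P m by exists #|S|; apply/existsP; exists S; rewrite subxx !eqxx.
case: (ex_minnP exP) => m /existsP [L /and3P [LS /eqP CL /eqP cL]] minm.
exists L; split => //.
apply/forallP => L'; apply/implyP => pL'; apply/negP => /eqP CL'.
have : P #|L'|.
  apply/existsP; exists L'; rewrite (subset_trans (proper_sub pL') LS) CL' CL !eqxx //.
move/minm; rewrite -cL => /(leq_trans (proper_card pL')); by rewrite ltnn.
Qed.

Lemma rc_height : rc_prop G (height G + 1).
Proof.
move=> n Hn I J Hsim k.
set r := height G + 1 in Hn Hsim.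
have n0 : (0 < n)%N by apply: leq_trans Hn; rewrite /r addn1.
pose j0 : 'I_n := Ordinal n0.
pose S := [set I j | j : 'I_n].
have [L [LS CL indL]] := exists_indep S.
have cLH : #|L| <= height G by apply: (leq_bigmax_cond L).
have cLr : #|L| < r by rewrite /r addn1 ltnS.
pose idx (x : T) : 'I_n := odflt j0 [pick j | I j == x].
have idxE x : x \in L -> I (idx x) = x.
  move=> /(subsetP LS) /imsetP [j _ ->]; rewrite /idx.
  by case: pickP => [j' /eqP //|/(_ j)]; rewrite eqxx.
pose kf (j : 'I_n) : 'I_r -> 'I_n :=
  fun i => if (i < #|L|)%N then idx (nth (I j) (enum L) i) else j.
have get j : exists2 h, h \in G & (forall x, x \in L -> h x = J (idx x)) /\ h (I j) = J j.
  have [h hG hk] := Hsim (kf j); exists h => //; split.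
    move=> x Lx.
    have ixL : (index x (enum L) < #|L|)%N by rewrite cardE index_mem mem_enum.
    have ix : (index x (enum L) < r)%N by apply: ltn_trans cLr.
    have := hk (Ordinal ix); rewrite /kf /=.
    by rewrite ixL nth_index ?mem_enum // idxE.
  by have := hk (Ordinal cLr); rewrite /kf /= ltnn.
have [h hG [hL _]] := get j0.
exists h => // i.
have [hj hjG [hjL hjj]] := get (k i).
have g : h * hj^-1 \in 'C_G(L | 'P).
  apply/stabP; split; first by rewrite groupM ?groupV.
  by move=> x Lx; rewrite permM hL // -hjL // permK.
rewrite CL in g; have [_ gS] := stabP _ _ g.
have kS : I (k i) \in S by apply/imsetP; exists (k i).
have := gS (I (k i)) kS.
rewrite permM -hjj => /(congr1 hj); rewrite permKV => ->.
by [].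
Qed.

End Aux.
Local Open Scope nat_scope.

Lemma least_exists (P : nat -> Prop) m : P m -> exists r, P r /\ forall r', P r' -> r <= r'.
Proof.
elim: m {-2}m (leqnn m) => [|N IH] m Hm Pm.
  exists m; split => // r' _; by move: Hm; rewrite leqn0 => /eqP ->.
destruct (classic (exists r', P r' /\ r' < m)) as [[r' [Pr' lt]]|nx].
  by apply: (IH r') => //; rewrite -ltnS (leq_trans lt).
exists m; split => // r' Pr'; rewrite leqNgt; apply/negP => lt; apply: nx; by exists r'.
Qed.

Theorem lemma2p1 (T : finType) (G : {group {perm T}}) :
  exists r, is_RC G r /\ r <= height G + 1.
Proof.
have [r [Pr minr]] := least_exists (@rc_height T G).
exists r; split => //; exact: minr (@rc_height T G).
Qed.
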